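(* Let $G=(V,E)$ be a finite cavity-monotone network. As a function of $t\in(0,\infty)$, the energy $U(G;t)$ is non-decreasing, tends to $0$ as $t\to0$ and to $M(G)$ as $t\to\infty$. More precisely, $$\forall t>0,\quad U(G;t)\le t\sum_{ij\in E}A(\mu_i)A(\mu_j),$$ $$\forall t>1,\quad U(G;t)\ge M(G)-\frac{1}{\log t}\Big(|E|\log 2+\sum_{i\in V}\log A(\mu_i)\Big),$$ where for a measure $\mu$, $A(\mu)=\max\mu/\min\mu$ with $\max\mu=\max\{\mu(F):\mu(F)>0\}$ and $\min\mu=\min\{\mu(F):\mu(F)>0\}$.
   Context: Measures over subsets: for a finite set $E$, a measure is $\mu:2^E\to[0,\infty)$. For $\mathbf w\in(0,\infty)^E$, $\mathbb P^{\mathbf w}_\mu(\mathcal F=F)=\mu(F)\prod_{e\in F}w_e/\sum_{F'}\mu(F')\prod_{e\in F'}w_e$. $\mu$ is Rayleigh if for all $\mathbf w\in(0,\infty)^E$, $e\neq f$: $\mathbb P^{\mathbf w}_\mu(e,f\in\mathcal F)\le\mathbb P^{\mathbf w}_\mu(e\in\mathcal F)\mathbb P^{\mathbf w}_\mu(f\in\mathcal F)$; size-increasing if for all $\mathbf w\in(0,\infty)^E$, $e\in E$: $\mathbb E^{\mathbf w}_\mu[|\mathcal F|\mathbf 1_{e\in\mathcal F}]>\mathbb E^{\mathbf w}_\mu|\mathcal F|\,\mathbb P^{\mathbf w}_\mu(e\in\mathcal F)$; cavity-monotone if $\mu(\emptyset)>0$, Rayleigh and size-increasing. Networks: a finite network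 is a finite simple graph $G=(V,E)$ with, for each $i\in V$, a local measure $\mu_i$ over the subsets of $E_i$ (edges incident to $i$); cavity-monotone if every $\mu_i$ is. Global measure $\mu(F)=\prod_{i}\mu_i(F\cap E_i)$; $Z(G;t)=\sum_{F\subseteq E}\mu(F)t^{|F|}$; Gibbs–Boltzmann law $\mathbb P^t_G(\mathcal F=F)=\mu(F)t^{|F|}/Z(G;t)$; energy $U(G;t)=\mathbb E^t_G|\mathcal F|$; $M(G)=\max\{|F|:\mu(F)>0\}$. *)

(* Defs.v *)
From HB Require Import structures.
From mathcomp Require Import all_boot.
From Stdlib Require Import Reals.
Set Implicit Arguments. Unset Strict Implicit. Unset Printing Implicit Defensive.

Local Open Scope R_scope.


Definition posb (x : R) : bool := if Rlt_dec 0 x then true else false.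

Section Measures.
Variable T : finType.
(* A measure over the subsets of the finite ground set S : {set T}:
   mu : 2^S -> [0,oo) (values of mu outside 2^S are irrelevant). *)
Definition is_measure (S : {set T}) (mu : {set T} -> R) : Prop :=
  forall F : {set T}, F \subset S -> 0 <= mu F.

Definition wweight (mu : {set T} -> R) (w : T -> R) (F : {set T}) : R :=
  mu F * \big[Rmult/1]_(e in F) w e.

Definition wZ (S : {set T}) mu w : R := \big[Rplus/0]_(F : {set T} | F \subset S) wweight mu w F.

Definition wProb (S : {set T}) mu w (P : pred {set T}) : R :=
  (\big[Rplus/0]_(F : {set T} | (F \subset S) && P F) wweight mu w F) / wZ S mu w.

Definition wExp (S : {set T}) mu w (f : {set T} -> R) : R :=
  (\big[Rplus/0]_(F : {set T} | F \subset S) (f F * wweight mu w F)) / wZ S mu w.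

Definition pos_weights (S : {set T}) (w : T -> R) : Prop :=
  forall e, e \in S -> 0 < w e.

Definition Rayleigh (S : {set T}) mu : Prop :=
  forall w, pos_weights S w ->
  forall e f, e \in S -> f \in S -> e <> f ->
    wProb S mu w (fun F => (e \in F) && (f \in F))
      <= wProb S mu w (fun F => e \in F) * wProb S mu w (fun F => f \in F).

Definition size_increasing (S : {set T}) mu : Prop :=
  forall w, pos_weights S w ->
  forall e, e \in S ->
    wExp S mu w (fun F => INR #|F| * (if e \in F then 1 else 0))
      > wExp S mu w (fun F => INR #|F|) * wProb S mu w (fun F => e \in F).

Definition cavity_monotone (S : {set T}) mu : Prop :=
  0 < mu set0 /\ Rayleigh S mu /\ size_increasing S mu.

Definition pos_values (S : {set T}) mu : seq R :=
  [seq mu F | F <- enum [pred F : {set T} | F \subset S] & posb (mu F)].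
Definition max_mu (S : {set T}) mu : R :=
  let l := pos_values S mu in foldr Rmax (head 0 l) l.
Definition min_mu (S : {set T}) mu : R :=
  let l := pos_values S mu in foldr Rmin (head 0 l) l.
Definition Aratio (S : {set T}) mu : R := max_mu S mu / min_mu S mu.
End Measures.

Section Networks.
Variable V : finType.
Definition simple_graph (E : {set {set V}}) : Prop :=
  forall f, f \in E -> #|f| = 2%nat.

Definition Einc (E : {set {set V}}) (i : V) : {set {set V}} := [set f in E | i \in f].

Definition network_measures (E : {set {set V}}) (mu : V -> {set {set V}} -> R) : Prop :=
  forall i, is_measure (Einc E i) (mu i).

Definition cavity_monotone_network (E : {set {set V}}) (mu : V -> {set {set V}} -> R) : Prop :=
  forall i, cavity_monotone (Einc E i) (mu i).

Definition global_mu (E : {set {set V}}) mu (F : {set {set V}}) : R :=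
  \big[Rmult/1]_(i : V) mu i (F :&: Einc E i).

Definition Zpart (E : {set {set V}}) mu (t : R) : R :=
  \big[Rplus/0]_(F : {set {set V}} | F \subset E) (global_mu E mu F * t ^ #|F|).

Definition energy (E : {set {set V}}) mu (t : R) : R :=
  (\big[Rplus/0]_(F : {set {set V}} | F \subset E) (INR #|F| * global_mu E mu F * t ^ #|F|)) / Zpart E mu t.

Definition Mmax (E : {set {set V}}) mu : nat :=
  \max_(F : {set {set V}} | (F \subset E) && posb (global_mu E mu F)) #|F|.
End Networks.

(* Main.v *)
Require Import Defs.
From HB Require Import structures.
From mathcomp Require Import all_boot.
From Stdlib Require Import Reals Lra Lia Psatz.
Set Implicit Arguments. Unset Strict Implicit. Unset Printing Implicit Defensive.
Local Open Scope R_scope.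

Lemma Rplus_assoc' : associative Rplus. Proof. move=>*; by rewrite Rplus_assoc. Qed.
Lemma Rmult_assoc' : associative Rmult. Proof. move=>*; by rewrite Rmult_assoc. Qed.
HB.instance Definition _ := Monoid.isComLaw.Build R 0 Rplus Rplus_assoc' Rplus_comm Rplus_0_l.
HB.instance Definition _ := Monoid.isComLaw.Build R 1 Rmult Rmult_assoc' Rmult_comm Rmult_1_l.
HB.instance Definition _ := Monoid.isMulLaw.Build R 0 Rmult Rmult_0_l Rmult_0_r.
HB.instance Definition _ := Monoid.isAddLaw.Build R Rmult Rplus Rmult_plus_distr_r Rmult_plus_distr_l.

Section G.
Variable I : finType.

Lemma sumR_ge0 (P : pred I) (F : I -> R) :
  (forall i, P i -> 0 <= F i) -> 0 <= \big[Rplus/0]_(i | P i) F i.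
Proof. move=> H; apply: (big_ind (fun x => 0 <= x)) => //; [lra| by move=>*; lra]. Qed.

Lemma sumR_le (P : pred I) (F G : I -> R) :
  (forall i, P i -> F i <= G i) ->
  \big[Rplus/0]_(i | P i) F i <= \big[Rplus/0]_(i | P i) G i.
Proof. move=> H; apply: (big_ind2 (fun x y => x <= y)) => //; [lra| by move=>*; lra]. Qed.

Lemma prodR_ge0 (P : pred I) (F : I -> R) :
  (forall i, P i -> 0 <= F i) -> 0 <= \big[Rmult/1]_(i | P i) F i.
Proof. move=> H; apply: (big_ind (fun x => 0 <= x)) => //; [lra| by move=>*; apply Rmult_le_pos]. Qed.

Lemma prodR_gt0 (P : pred I) (F : I -> R) :
  (forall i, P i -> 0 < F i) -> 0 < \big[Rmult/1]_(i | P i) F i.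
Proof. move=> H; apply: (big_ind (fun x => 0 < x)) => //; [lra| by move=>*; apply Rmult_lt_0_compat]. Qed.

Lemma prodR_le (P : pred I) (F G : I -> R) :
  (forall i, P i -> 0 <= F i <= G i) ->
  \big[Rmult/1]_(i | P i) F i <= \big[Rmult/1]_(i | P i) G i.
Proof.
move=> H.
suff: 0 <= \big[Rmult/1]_(i | P i) F i <= \big[Rmult/1]_(i | P i) G i by case.
apply: (big_ind2 (fun x y => 0 <= x <= y)) => //; first lra.
move=> x1 x2 y1 y2 [h1 h2] [h3 h4]; split; first by apply Rmult_le_pos.
apply Rmult_le_compat; lra.
Qed.

Lemma prodR_const_pow (P : pred I) (c : R) :
  \big[Rmult/1]_(i | P i) c = c ^ #|P|.
Proof.
rewrite cardE /enum_mem -big_filter /=.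
elim: (filter _ _) => [|x s IH]; first by rewrite big_nil.
by rewrite big_cons IH.
Qed.

Lemma INR_card (P : pred I) : INR #|P| = \big[Rplus/0]_(i | P i) 1.
Proof.
rewrite cardE /enum_mem -big_filter /=.
elim: (filter _ _) => [|x s IH]; first by rewrite big_nil.
by rewrite big_cons -IH -/(INR (size s).+1) S_INR Rplus_comm.
Qed.

End G.


Lemma posbP x : posb x = true <-> 0 < x.
Proof. rewrite /posb; case: Rlt_dec => //. Qed.

Section Down.
Variable T : finType.
Variable S0 : {set T}.
Variable mu : {set T} -> R.
Hypothesis hmeas : is_measure S0 mu.
Hypothesis h0 : 0 < mu set0.

Definition Sm w (P : pred {set T}) :=
  \big[Rplus/0]_(F : {set T} | (F \subset S0) && P F) wweight mu w F.

Lemma wweight_ge0 w (F : {set T}) : (forall g, 0 <= w g) -> F \subset S0 -> 0 <= wweight mu w F.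
Proof. move=> hw hF; apply Rmult_le_pos; [exact: hmeas| exact: prodR_ge0]. Qed.

Lemma Sm_split w (P a : pred {set T}) :
  Sm w P = Sm w (fun F => P F && a F) + Sm w (fun F => P F && ~~ a F).
Proof.
rewrite /Sm (bigID a) /=; congr (_ + _); apply: eq_bigl => F; by rewrite andbA.
Qed.

Lemma wZ_pos w : (forall g, 0 <= w g) -> 0 < wZ S0 mu w.
Proof.
move=> hw; rewrite /wZ (bigD1 set0) ?sub0set //=.
have -> : wweight mu w set0 = mu set0 by rewrite /wweight big_set0 Rmult_1_r.
have := @sumR_ge0 _ (fun F : {set T} => (F \subset S0) && (F != set0)) (wweight mu w).
move=> H; apply: Rplus_lt_le_0_compat => //; apply: H => F hF; exact: (wweight_ge0 hw (andP hF).1).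
Qed.

Lemma Sm_ext w (P Q : pred {set T}) : P =1 Q -> Sm w P = Sm w Q.
Proof. by move=> hPQ; rewrite /Sm; apply: eq_bigl => F; rewrite hPQ. Qed.

Lemma ray_ADBC w e f : Rayleigh S0 mu -> (forall g, 0 < w g) -> e \in S0 -> f \in S0 -> e <> f ->
  Sm w (fun F => (e \notin F) && (f \notin F)) * Sm w (fun F => (e \in F) && (f \in F))
  <= Sm w (fun F => (e \in F) && (f \notin F)) * Sm w (fun F => (e \notin F) && (f \in F)).
Proof.
move=> hR hw he hf hef.
have hw' : pos_weights S0 w by move=> g _; apply hw.
have := hR w hw' e f he hf hef; rewrite /wProb.
have hZ := wZ_pos (fun g => Rlt_le _ _ (hw g)).
set A := Sm w (fun F => (e \notin F) && (f \notin F)).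
set B := Sm w (fun F => (e \in F) && (f \notin F)).
set C := Sm w (fun F => (e \notin F) && (f \in F)).
set D := Sm w (fun F => (e \in F) && (f \in F)).
have eZ : wZ S0 mu w = A + B + C + D.
  have -> : wZ S0 mu w = Sm w predT.
    by rewrite /wZ /Sm; apply: eq_bigl => F; rewrite andbT.
  rewrite (Sm_split w predT (fun F => e \in F)).
  rewrite (Sm_split w (fun F => predT F && (e \in F)) (fun F => f \in F)).
  rewrite (Sm_split w (fun F => predT F && ~~ (e \in F)) (fun F => f \in F)).
  rewrite /A /B /C /D (@Sm_ext w (fun F => predT F && (e \in F) && (f \in F)) (fun F => (e \in F) && (f \in F))) //.
  rewrite (@Sm_ext w (fun F => predT F && (e \in F) && ~~ (f \in F)) (fun F => (e \in F) && (f \notin F))) //.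
  rewrite (@Sm_ext w (fun F => predT F && ~~ (e \in F) && (f \in F)) (fun F => (e \notin F) && (f \in F))) //.
  rewrite (@Sm_ext w (fun F => predT F && ~~ (e \in F) && ~~ (f \in F)) (fun F => (e \notin F) && (f \notin F))) //.
  lra.
have eD : \big[Rplus/0]_(F : {set T} | (F \subset S0) && ((e \in F) && (f \in F))) wweight mu w F = D by [].
have eE : \big[Rplus/0]_(F : {set T} | (F \subset S0) && (e \in F)) wweight mu w F = B + D.
  have -> : \big[Rplus/0]_(F : {set T} | (F \subset S0) && (e \in F)) wweight mu w F
   = Sm w (fun F => e \in F) by [].
  rewrite (Sm_split w (fun F => e \in F) (fun F => f \in F)) /B /D; lra.
have eF : \big[Rplus/0]_(F : {set T} | (F \subset S0) && (f \in F)) wweight mu w F = C + D.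
  have -> : \big[Rplus/0]_(F : {set T} | (F \subset S0) && (f \in F)) wweight mu w F
   = Sm w (fun F => f \in F) by [].
  rewrite (Sm_split w (fun F => f \in F) (fun F => e \in F)).
  rewrite (@Sm_ext w (fun F => (f \in F) && (e \in F)) (fun F => (e \in F) && (f \in F))); last by move=> F; rewrite andbC.
  rewrite (@Sm_ext w (fun F => (f \in F) && ~~ (e \in F)) (fun F => (e \notin F) && (f \in F))); last by move=> F; rewrite andbC.
  rewrite /C /D; lra.
rewrite eD eE eF eZ; rewrite eZ in hZ.
move=> H.
set Z := A + B + C + D in H hZ.
have H2 : D * Z <= (B + D) * (C + D).
  have := Rmult_le_compat_r (Z * Z) _ _ (Rlt_le _ _ (Rmult_lt_0_compat _ _ hZ hZ)) H.
  have nz : Z <> 0 by lra.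
  have -> : D / Z * (Z * Z) = D * Z by field.
  have -> : (B + D) / Z * ((C + D) / Z) * (Z * Z) = (B + D) * (C + D) by field.
  done.
rewrite /Z in H2; nra.
Qed.

Lemma sum_ge_term (I : finType) (P : pred I) (F : I -> R) j :
  P j -> (forall i, P i -> 0 <= F i) -> F j <= \big[Rplus/0]_(i | P i) F i.
Proof.
move=> Pj H; rewrite (bigD1 j) //=.
have : 0 <= \big[Rplus/0]_(i | P i && (i != j)) F i.
  by apply: sumR_ge0 => i /andP[Pi _]; apply: H.
lra.
Qed.

Lemma powle (l : R) (m n : nat) : 1 <= l -> leq m n -> l ^ m <= l ^ n.

Proof. move=> hl /leP hmn; exact: Rle_pow. Qed.

Definition wl (l : R) (S : {set T}) (g : T) : R :=
  if g \in S then l else / l ^ (#|T|.+1).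

Lemma wl_pos l (S : {set T}) g : 0 < l -> 0 < wl l S g.
Proof. move=> hl; rewrite /wl; case: ifP => _ //; apply: Rinv_0_lt_compat; exact: pow_lt. Qed.

Lemma wl_le l (S : {set T}) g : 1 <= l -> wl l S g <= l.
Proof.
move=> hl; rewrite /wl; case: ifP => _; first lra.
have h1 := pow_R1_Rle l (#|T|.+1) hl.
have : / l ^ (#|T|.+1) <= / 1 by apply: Rinv_le_contravar => //; lra.
rewrite Rinv_1; lra.
Qed.

Lemma prod_in l (S : {set T}) (F : {set T}) : F \subset S -> \big[Rmult/1]_(g in F) wl l S g = l ^ #|F|.
Proof.
move=> hF; rewrite (eq_bigr (fun _ => l)); first by rewrite prodR_const_pow.
by move=> g gF; rewrite /wl (subsetP hF g gF).
Qed.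

Lemma prod_out l (S : {set T}) (F : {set T}) h : 1 <= l -> h \in F -> h \notin S ->
  \big[Rmult/1]_(g in F) wl l S g <= / l.
Proof.
move=> hl hF hS; rewrite (bigD1 h) //=.
have e1 : wl l S h = / l ^ (#|T|.+1) by rewrite /wl (negbTE hS).
rewrite e1.
have hp : \big[Rmult/1]_(i | (i \in F) && (i != h)) wl l S i <= l ^ #|T|.
  apply: Rle_trans (_ : \big[Rmult/1]_(i | (i \in F) && (i != h)) l <= _).
    apply: prodR_le => i _; split; [apply: Rlt_le; apply: wl_pos; lra | exact: wl_le].
  rewrite prodR_const_pow; apply: powle => //; exact: max_card.
have hlp : 0 < l ^ #|T| by apply: pow_lt; lra.
have -> : / l = / l ^ (#|T|.+1) * l ^ #|T|.
  have ? : l <> 0 by lra. have ? : l ^ #|T| <> 0 by lra.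
  rewrite /= Rinv_mult; field; auto.
apply: Rmult_le_compat_l => //; apply: Rlt_le; apply: Rinv_0_lt_compat; apply: pow_lt; lra.
Qed.


Lemma mu_ge0 (F : {set T}) : F \subset S0 -> 0 <= mu F.
Proof. exact: hmeas. Qed.

Lemma down_step (S : {set T}) e f : Rayleigh S0 mu -> S \subset S0 -> 0 < mu S ->
  e \in S -> f \in S -> e != f ->
  (forall P : {set T}, P \subset S0 -> (#|P| < #|S|)%nat -> 0 < mu P ->
      forall Q : {set T}, Q \subset P -> 0 < mu Q) ->
  0 < mu (S :\ e).
Proof.
move=> hR hS hmS heS hfS hef IH.
have hSe0 : S :\ e \subset S0 by apply: subset_trans hS; exact: subsetDl.
case: (Rlt_dec 0 (mu (S :\ e))) => // hne.
have hz : mu (S :\ e) = 0 by have := mu_ge0 hSe0; lra.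
exfalso.
set Rs := S :\ e :\ f.
have hRS : Rs \subset S by rewrite /Rs; apply: subset_trans (subsetDl _ _) (subsetDl _ _).
set a := \max_(U : {set T} | (U \subset Rs) && posb (mu U)) #|U|.
have P0 : (set0 \subset Rs) && posb (mu set0) by rewrite sub0set; apply/posbP.
have [Ta [hTaR hTap] haTa] : exists2 Ta : {set T}, (Ta \subset Rs) /\ 0 < mu Ta & #|Ta| = a.
  rewrite /a (bigmax_eq_arg set0 P0); case: arg_maxnP => // U /andP[h1 /posbP h2] _.
  by exists U.
have ha : forall U : {set T}, U \subset Rs -> 0 < mu U -> (#|U| <= a)%nat.
  move=> U h1 h2; apply: (leq_bigmax_cond (P := fun U : {set T} => (U \subset Rs) && posb (mu U))).
  by rewrite h1; apply/posbP.
have hTa0 : Ta \subset S0 by apply: subset_trans hS; apply: subset_trans hRS.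
have hcS : (2 <= #|S|)%nat.
  rewrite (cardsD1 e S) heS (cardsD1 f (S :\ e)) in_setD1 hfS eq_sym hef /=.
  by rewrite add1n ltnS add1n ltnS.
set KB := \big[Rplus/0]_(F : {set T} | (F \subset S0) && ((e \in F) && (f \notin F))) mu F.
set KC := \big[Rplus/0]_(F : {set T} | (F \subset S0) && ((e \notin F) && (f \in F))) mu F.
have hKB : 0 <= KB by apply: sumR_ge0 => F /andP[h _]; exact: mu_ge0.
have hKC : 0 <= KC by apply: sumR_ge0 => F /andP[h _]; exact: mu_ge0.
set c := mu Ta * mu S.
have hc : 0 < c by apply: Rmult_lt_0_compat.
set l := KB * KC / c + 1.
have hl1 : 1 <= l.
  have : 0 <= KB * KC / c by apply: Rmult_le_pos; [exact: Rmult_le_pos| apply: Rlt_le; exact: Rinv_0_lt_compat].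
  rewrite /l; lra.
have hl0 : 0 < l by lra.
set w := wl l S.
have hwp : forall g, 0 < w g by move=> g; apply: wl_pos.
have hww : forall F : {set T}, F \subset S0 -> 0 <= wweight mu w F.
  by move=> F hF; apply: wweight_ge0 => // g; apply: Rlt_le.
have hef' : e <> f by move=> h; move: hef; rewrite h eqxx.
have := ray_ADBC hR hwp (subsetP hS e heS) (subsetP hS f hfS) hef'.
set A := Sm w _. set D := Sm w _. set B := Sm w _. set C := Sm w _.
move=> hADBC.
have hA : mu Ta * l ^ a <= A.
  have -> : mu Ta * l ^ a = wweight mu w Ta.
    by rewrite /wweight /w prod_in ?haTa //; apply: subset_trans hRS.
  apply: (sum_ge_term (P := fun F : {set T} => (F \subset S0) && ((e \notin F) && (f \notin F)))).
    rewrite hTa0 /=; move: hTaR; rewrite /Rs !subsetD1 => /andP[/andP[_ ->] ->] //.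
  by move=> F /andP[hF _]; apply: hww.
have hD : mu S * l ^ #|S| <= D.
  have -> : mu S * l ^ #|S| = wweight mu w S by rewrite /wweight /w prod_in.
  apply: (sum_ge_term (P := fun F : {set T} => (F \subset S0) && ((e \in F) && (f \in F)))).
    by rewrite hS heS hfS.
  by move=> F /andP[hF _]; apply: hww.
have hB : B <= KB * l ^ a.+1.
  rewrite /KB big_distrl /=.
  apply: sumR_le => F /andP[hF /andP[heF hfF]].
  rewrite /wweight; case: (Rlt_dec 0 (mu F)) => hmF; last first.
    have -> : mu F = 0 by have := mu_ge0 hF; lra.
    rewrite !Rmult_0_l; lra.
  apply: Rmult_le_compat_l; first lra.
  case: (boolP (F \subset S)) => hFS.
    rewrite /w prod_in //; apply: (@powle l _ a.+1) => //.
    have hFp : F \proper S.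
      rewrite properEneq hFS andbT; apply/eqP => hFS'; move: hfF; by rewrite hFS' hfS.
    have hFe := IH F hF (proper_card hFp) hmF (F :\ e) (subsetDl _ _).
    have hFeR : F :\ e \subset Rs.
      apply/subsetP => g; rewrite /Rs !in_setD1 => /andP[hge hgF].
      rewrite hge (subsetP hFS g hgF) !andbT.
      by apply/eqP => gf; move: hfF; rewrite -gf hgF.
    have := ha _ hFeR hFe.
    by rewrite (cardsD1 e F) heF add1n ltnS.
  case/subsetPn: hFS => h hhF hhS.
  apply: Rle_trans (prod_out hl1 hhF hhS) _.
  have : / l <= 1.
    have : / l <= / 1 by apply: Rinv_le_contravar; lra.
    by rewrite Rinv_1.
  have := pow_R1_Rle l a.+1 hl1; move=> h1 h2; change (l * l ^ a) with (l ^ a.+1); lra.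
have hC : l * C <= KC * l ^ #|S|.-1.
  rewrite /KC big_distrl /= /C /Sm big_distrr /=.
  apply: sumR_le => F /andP[hF /andP[heF hfF]].
  rewrite /wweight; case: (Rlt_dec 0 (mu F)) => hmF; last first.
    have -> : mu F = 0 by have := mu_ge0 hF; lra.
    rewrite !Rmult_0_l Rmult_0_r; lra.
  rewrite -Rmult_assoc (Rmult_comm l) Rmult_assoc.
  apply: Rmult_le_compat_l; first lra.
  case: (boolP (F \subset S)) => hFS.
    rewrite /w prod_in // -/(l ^ #|F|.+1); apply: powle => //.
    have hFSe : F \subset S :\ e.
      apply/subsetP => g hgF; rewrite in_setD1 (subsetP hFS g hgF) andbT.
      by apply/eqP => ge; move: heF; rewrite -ge hgF.
    have hFp : F \proper S :\ e.
      rewrite properEneq hFSe andbT; apply/eqP => hFS'; move: hmF; by rewrite hFS' hz; lra.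
    have := proper_card hFp.
    rewrite (cardsD1 e S) heS add1n /=.
    done.
  case/subsetPn: hFS => h hhF hhS.
  apply: Rle_trans (_ : l * / l <= _).
    apply: Rmult_le_compat_l; [lra | exact: prod_out hl1 hhF hhS].
  rewrite Rinv_r; last lra.
  exact: pow_R1_Rle.
have hpa : 0 < l ^ a by apply: pow_lt.
have hpS : 0 < l ^ #|S| by apply: pow_lt.
have e1 : l ^ #|S| = l * l ^ #|S|.-1 by case: #|S| hcS.
have e2 : l ^ a.+1 = l * l ^ a by [].
have hBpos : 0 <= B by apply: sumR_ge0 => F /andP[hF _]; apply: hww.
have hCpos : 0 <= C by apply: sumR_ge0 => F /andP[hF _]; apply: hww.
have hApos : 0 <= mu Ta * l ^ a by apply: Rmult_le_pos; lra.
have hDpos : 0 <= mu S * l ^ #|S| by apply: Rmult_le_pos; lra.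
have h1 : l * (mu Ta * l ^ a * (mu S * l ^ #|S|)) <= l * (A * D).
  apply: Rmult_le_compat_l; first lra.
  apply: Rmult_le_compat => //.
have h2 : l * (A * D) <= B * (l * C) by nra.
have h3 : B * (l * C) <= KB * l ^ a.+1 * (KC * l ^ #|S|.-1).
  apply: Rmult_le_compat => //; nra.
have h4 : c * l * (l ^ a * l ^ #|S|) <= KB * KC * (l ^ a * l ^ #|S|).
  have : l * (mu Ta * l ^ a * (mu S * l ^ #|S|)) <= KB * l ^ a.+1 * (KC * l ^ #|S|.-1) by lra.
  rewrite e2 e1 /c; nra.
have hpp : 0 < l ^ a * l ^ #|S| by apply: Rmult_lt_0_compat.
have h5 : c * l <= KB * KC by nra.
have : c * l = KB * KC + c by rewrite /l; field; lra.
lra.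
Qed.

Lemma down_closed_n (n : nat) : Rayleigh S0 mu -> forall S : {set T}, (#|S| <= n)%nat ->
  S \subset S0 -> 0 < mu S -> forall Q : {set T}, Q \subset S -> 0 < mu Q.
Proof.
move=> hR; elim: n => [|n IHn] S hcard hS hmS Q hQ.
  move: hcard; rewrite leqn0 cards_eq0 => /eqP hS0.
  by move: hQ; rewrite hS0 subset0 => /eqP ->.
case: (eqVneq Q S) => [-> //|hQS].
have hQp : Q \proper S by rewrite properEneq hQS hQ.
case/properP: hQp => _ [e heS heQ].
have IH' : forall P : {set T}, P \subset S0 -> (#|P| < #|S|)%nat -> 0 < mu P ->
      forall Q : {set T}, Q \subset P -> 0 < mu Q.
  move=> P hP hcP hmP Q' hQ'; apply: (IHn P) => //.
  by rewrite -ltnS; apply: leq_trans hcard.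
have hSe : 0 < mu (S :\ e).
  case: (set_0Vmem (S :\ e)) => [hS0 | [f hf]].
    by rewrite hS0.
  move: hf; rewrite in_setD1 => /andP[hfe hfS].
  apply: (down_step hR hS hmS heS hfS _ IH').
  by rewrite eq_sym.
apply: (IH' (S :\ e)) => //.
- by apply: subset_trans hS; exact: subsetDl.
- by rewrite (cardsD1 e S) heS.
- apply/subsetP => g hg; rewrite in_setD1 (subsetP hQ g hg) andbT.
  by apply/eqP => ge; move: heQ; rewrite -ge hg.
Qed.

Lemma down_closed : Rayleigh S0 mu -> forall S Q : {set T},
  S \subset S0 -> 0 < mu S -> Q \subset S -> 0 < mu Q.
Proof. move=> hR S Q hS hmS hQ; exact: (@down_closed_n #|S| hR S (leqnn #|S|) hS hmS Q hQ). Qed.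

End Down.


Lemma ln_le x y : 0 < x -> x <= y -> ln x <= ln y.
Proof. move=> hx [h|->]; [apply: Rlt_le; exact: ln_increasing| lra]. Qed.

Lemma ln_ge x : 0 < x -> 1 - / x <= ln x.
Proof.
move=> hx; have := exp_ineq1_le (ln (/ x)).
rewrite exp_ln; last by apply: Rinv_0_lt_compat.
rewrite ln_Rinv //; lra.
Qed.

Section Ratio.
Variable T : finType.
Variable S0 : {set T}.
Variable mu : {set T} -> R.
Hypothesis h0 : 0 < mu set0.

Lemma foldr_min_le (s : seq {set T}) d F : F \in s -> 0 < mu F ->
  foldr Rmin d [seq mu G | G <- s & posb (mu G)] <= mu F.
Proof.
elim: s => [//|x s IH]; rewrite inE => /orP[/eqP <- | hF] hm /=.
  have -> : posb (mu F) = true by apply/posbP.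
  exact: Rmin_l.
case: (posb (mu x)) => /=; last exact: IH.
apply: Rle_trans (Rmin_r _ _) _; exact: IH.
Qed.

Lemma foldr_max_ge (s : seq {set T}) d F : F \in s -> 0 < mu F ->
  mu F <= foldr Rmax d [seq mu G | G <- s & posb (mu G)].
Proof.
elim: s => [//|x s IH]; rewrite inE => /orP[/eqP <- | hF] hm /=.
  have -> : posb (mu F) = true by apply/posbP.
  exact: Rmax_l.
case: (posb (mu x)) => /=; last exact: IH.
apply: Rle_trans (Rmax_r _ _); exact: IH.
Qed.

Lemma foldr_min_pos (s : seq {set T}) d : 0 < d ->
  0 < foldr Rmin d [seq mu G | G <- s & posb (mu G)].
Proof.
move=> hd; elim: s => [//|x s IH] /=.
case hx: (posb (mu x)) => //=.
apply: Rmin_glb_lt => //; exact/posbP.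
Qed.

Lemma head_pos (s : seq {set T}) F : F \in s -> 0 < mu F ->
  0 < head 0 [seq mu G | G <- s & posb (mu G)].
Proof.
elim: s => [//|x s IH]; rewrite inE /= => /orP[/eqP <- | hF] hm.
  have -> : posb (mu F) = true by apply/posbP.
  done.
case hx: (posb (mu x)) => /=; [exact/posbP | exact: IH].
Qed.

Lemma in_enumS (F : {set T}) : F \subset S0 -> F \in enum [pred F : {set T} | F \subset S0].
Proof. by move=> h; rewrite mem_enum. Qed.

Lemma min_mu_pos : 0 < min_mu S0 mu.
Proof.
rewrite /min_mu /pos_values; apply: foldr_min_pos.
apply: (head_pos (F := set0)) => //; apply: in_enumS; exact: sub0set.
Qed.

Lemma min_mu_le (F : {set T}) : F \subset S0 -> 0 < mu F -> min_mu S0 mu <= mu F.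
Proof. move=> hF hm; rewrite /min_mu /pos_values; apply: foldr_min_le => //; exact: in_enumS. Qed.

Lemma max_mu_ge (F : {set T}) : F \subset S0 -> 0 < mu F -> mu F <= max_mu S0 mu.
Proof. move=> hF hm; rewrite /max_mu /pos_values; apply: foldr_max_ge => //; exact: in_enumS. Qed.

Lemma max_mu_pos : 0 < max_mu S0 mu.
Proof. apply: Rlt_le_trans h0 _; apply: max_mu_ge => //; exact: sub0set. Qed.

Lemma Aratio_pos : 0 < Aratio S0 mu.
Proof. rewrite /Aratio; apply: Rdiv_lt_0_compat; [exact: max_mu_pos | exact: min_mu_pos]. Qed.

Lemma Aratio_bound (F G : {set T}) : F \subset S0 -> G \subset S0 -> 0 < mu G ->
  0 < mu F -> mu F <= Aratio S0 mu * mu G.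
Proof.
move=> hF hG hmG hmF.
have hmin := min_mu_pos.
have h1 := max_mu_ge hF hmF.
have h2 := min_mu_le hG hmG.
rewrite /Aratio.
apply: Rle_trans h1 _.
have e : max_mu S0 mu / min_mu S0 mu * min_mu S0 mu = max_mu S0 mu by field; lra.
rewrite -[X in X <= _]e.
apply: Rmult_le_compat_l => //.
apply: Rlt_le; apply: Rdiv_lt_0_compat; [exact: max_mu_pos | exact: hmin].
Qed.

End Ratio.


Lemma sumR_opp (I : finType) (P : pred I) (F : I -> R) :
  \big[Rplus/0]_(i | P i) - F i = - \big[Rplus/0]_(i | P i) F i.
Proof. rewrite (big_morph Ropp (id1 := 0) (op1 := Rplus)) //; [move=> x y; lra| lra]. Qed.

Lemma sumR_sub (I : finType) (P : pred I) (F G : I -> R) :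
  \big[Rplus/0]_(i | P i) (F i - G i) = \big[Rplus/0]_(i | P i) F i - \big[Rplus/0]_(i | P i) G i.
Proof. by rewrite big_split /= sumR_opp. Qed.

Lemma key_ineq (s t : R) (k m : nat) : 0 < s -> s <= t ->
  0 <= (INR k - INR m) * (t ^ k * s ^ m - s ^ k * t ^ m).
Proof.
move=> hs hst.
have gen : forall k m : nat, leq m k -> 0 <= INR k - INR m /\ 0 <= t ^ k * s ^ m - s ^ k * t ^ m.
  move=> k' m' /leP hmk; split; first by have := le_INR _ _ hmk; lra.
  have [d ->] : exists d, k' = (m' + d)%coq_nat by exists (k' - m')%coq_nat; lia.
  rewrite !pow_add.
  have hd : s ^ d <= t ^ d by apply: pow_incr; lra.
  have h1 : 0 < s ^ m' by apply: pow_lt.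
  have h2 : 0 < t ^ m' by apply: pow_lt; lra.
  have : 0 <= s ^ m' * t ^ m' * (t ^ d - s ^ d).
    apply: Rmult_le_pos; [apply: Rmult_le_pos; lra | lra].
  nra.
case: (leqP m k) => h.
  by case: (gen k m h) => h1 h2; apply: Rmult_le_pos.
case: (gen m k (ltnW h)) => h1 h2; nra.
Qed.

Lemma sum_le_sub (I : finType) (P Q : pred I) (f g : I -> R) :
  (forall i, P i -> Q i) -> (forall i, P i -> f i <= g i) -> (forall i, Q i -> 0 <= g i) ->
  \big[Rplus/0]_(i | P i) f i <= \big[Rplus/0]_(i | Q i) g i.
Proof.
move=> hPQ hfg hg; rewrite (big_mkcond P) (big_mkcond Q) /=.
apply: sumR_le => i _; case hP: (P i); first by rewrite (hPQ i hP); exact: hfg.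
case hQ: (Q i); [exact: hg | lra].
Qed.

Lemma ln_prod (I : finType) (P : pred I) (f : I -> R) : (forall i, P i -> 0 < f i) ->
  ln (\big[Rmult/1]_(i | P i) f i) = \big[Rplus/0]_(i | P i) ln (f i).
Proof.
move=> H.
suff : 0 < \big[Rmult/1]_(i | P i) f i /\ ln (\big[Rmult/1]_(i | P i) f i) = \big[Rplus/0]_(i | P i) ln (f i) by case.
apply: (big_ind2 (fun x y => 0 < x /\ ln x = y)).
- by split; [lra | exact: ln_1].
- move=> x1 x2 y1 y2 [h1 h2] [h3 h4]; split; first exact: Rmult_lt_0_compat.
  by rewrite ln_mult // h2 h4.
- move=> i Pi; split; [exact: H | done].
Qed.

Lemma prod_pos_factor (I : finType) (f : I -> R) j : (forall i, 0 <= f i) ->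
  0 < \big[Rmult/1]_(i : I) f i -> 0 < f j.
Proof.
move=> H hp; case: (Rlt_dec 0 (f j)) => // hj.
have e : f j = 0 by have := H j; lra.
move: hp; rewrite (bigD1 j) //= e Rmult_0_l; lra.
Qed.

Section Net.
Variable V : finType.
Variable E : {set {set V}}.
Variable mu : V -> {set {set V}} -> R.
Hypothesis hmeas : network_measures E mu.
Hypothesis hcm : cavity_monotone_network E mu.

Notation gm := (global_mu E mu).

Lemma mui_ge0 i (F : {set {set V}}) : 0 <= mu i (F :&: Einc E i).
Proof. apply: hmeas; exact: subsetIr. Qed.

Lemma gm_ge0 F : 0 <= gm F.
Proof. apply: prodR_ge0 => i _; exact: mui_ge0. Qed.

Lemma gm0 : 0 < gm set0.
Proof. apply: prodR_gt0 => i _; rewrite set0I; by case: (hcm i). Qed.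

Lemma Z_pos t : 0 <= t -> 0 < Zpart E mu t.
Proof.
move=> ht; rewrite /Zpart (bigD1 set0) ?sub0set //= cards0 /= Rmult_1_r.
apply: Rplus_lt_le_0_compat; first exact: gm0.
apply: sumR_ge0 => F _; apply: Rmult_le_pos; [exact: gm_ge0 | exact: pow_le].
Qed.

Definition Nt t := \big[Rplus/0]_(F : {set {set V}} | F \subset E) (INR #|F| * gm F * t ^ #|F|).

Lemma N_ge0 t : 0 <= t -> 0 <= Nt t.
Proof.
move=> ht; apply: sumR_ge0 => F _; apply: Rmult_le_pos; [apply: Rmult_le_pos; [exact: pos_INR | exact: gm_ge0]| exact: pow_le].
Qed.

Lemma energy_monotone s t : 0 < s -> s <= t -> energy E mu s <= energy E mu t.
Proof.
move=> hs hst.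
have hZs := Z_pos (Rlt_le _ _ hs).
have hZt : 0 < Zpart E mu t by apply: Z_pos; lra.
rewrite /energy -!/(Nt _).
suff : Nt s * Zpart E mu t <= Nt t * Zpart E mu s.
  move=> H; apply: (Rmult_le_reg_r (Zpart E mu s * Zpart E mu t)); first by apply: Rmult_lt_0_compat.
  have e1 : Nt s / Zpart E mu s * (Zpart E mu s * Zpart E mu t) = Nt s * Zpart E mu t by field; lra.
  have e2 : Nt t / Zpart E mu t * (Zpart E mu s * Zpart E mu t) = Nt t * Zpart E mu s by field; lra.
  by rewrite e1 e2.
pose h (F G : {set {set V}}) := INR #|F| * gm F * gm G * (t ^ #|F| * s ^ #|G| - s ^ #|F| * t ^ #|G|).
have eq1 : Nt t * Zpart E mu s - Nt s * Zpart E mu t =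
   \big[Rplus/0]_(F : {set {set V}} | F \subset E) \big[Rplus/0]_(G : {set {set V}} | G \subset E) h F G.
  rewrite /Nt /Zpart !big_distrl -sumR_sub /=.
  apply: eq_bigr => F _; rewrite !big_distrr -sumR_sub /=.
  apply: eq_bigr => G _; rewrite /h; move: (t ^ #|F|) (s ^ #|G|) (s ^ #|F|) (t ^ #|G|) (INR #|F|) (gm F) (gm G) => x1 x2 x3 x4 y1 y2 y3; ring.
have eq2 : \big[Rplus/0]_(F : {set {set V}} | F \subset E) \big[Rplus/0]_(G : {set {set V}} | G \subset E) h F G =
           \big[Rplus/0]_(F : {set {set V}} | F \subset E) \big[Rplus/0]_(G : {set {set V}} | G \subset E) h G F.
  by rewrite exchange_big.
have pos : 0 <= \big[Rplus/0]_(F : {set {set V}} | F \subset E) \big[Rplus/0]_(G : {set {set V}} | G \subset E) (h F G + h G F).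
  apply: sumR_ge0 => F _; apply: sumR_ge0 => G _.
  have := key_ineq #|F| #|G| hs hst.
  have := gm_ge0 F; have := gm_ge0 G.
  rewrite /h => a b c.
  have -> : INR #|F| * gm F * gm G * (t ^ #|F| * s ^ #|G| - s ^ #|F| * t ^ #|G|) +
    INR #|G| * gm G * gm F * (t ^ #|G| * s ^ #|F| - s ^ #|G| * t ^ #|F|) =
    (gm F * gm G) * ((INR #|F| - INR #|G|) * (t ^ #|F| * s ^ #|G| - s ^ #|F| * t ^ #|G|)).
    move: (t ^ #|F|) (s ^ #|G|) (s ^ #|F|) (t ^ #|G|) (INR #|F|) (INR #|G|) (gm F) (gm G) => x1 x2 x3 x4 y1 y2 y3 y4; ring.
  apply: Rmult_le_pos => //; exact: Rmult_le_pos.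
have eq3 : \big[Rplus/0]_(F : {set {set V}} | F \subset E) \big[Rplus/0]_(G : {set {set V}} | G \subset E) (h F G + h G F) =
   \big[Rplus/0]_(F : {set {set V}} | F \subset E) \big[Rplus/0]_(G : {set {set V}} | G \subset E) h F G +
   \big[Rplus/0]_(F : {set {set V}} | F \subset E) \big[Rplus/0]_(G : {set {set V}} | G \subset E) h G F.
  rewrite -big_split /=; apply: eq_bigr => F _; by rewrite big_split.
lra.
Qed.


Notation Ai i := (Aratio (Einc E i) (mu i)).

Lemma Ai_pos i : 0 < Ai i.
Proof. by apply: Aratio_pos; case: (hcm i). Qed.

Lemma local_bound i (e : {set V}) (G : {set {set V}}) : e \in E -> i \in e ->
  mu i ((e |: G) :&: Einc E i) <= Ai i * mu i (G :&: Einc E i).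
Proof.
move=> heE hie.
have [h0 [hR _]] := hcm i.
have hA := Ai_pos i.
have hm1 := mui_ge0 i G.
case: (Rlt_dec 0 (mu i ((e |: G) :&: Einc E i))) => hpos; last first.
  have : 0 <= Ai i * mu i (G :&: Einc E i) by apply: Rmult_le_pos; lra.
  lra.
have hsub : G :&: Einc E i \subset (e |: G) :&: Einc E i.
  by apply: setSI; exact: subsetU1.
have hmi : is_measure (Einc E i) (mu i) by move=> F hF; exact: hmeas.
have hG := down_closed hmi h0 hR (subsetIr _ _) hpos hsub.
exact: (Aratio_bound h0 (subsetIr _ _) (subsetIr _ _) hG hpos).
Qed.

Lemma gm_add (e : {set V}) (G : {set {set V}}) : e \in E ->
  gm (e |: G) <= (\big[Rmult/1]_(i in e) Ai i) * gm G.
Proof.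
move=> heE.
rewrite /global_mu.
apply: Rle_trans (_ : \big[Rmult/1]_(i : V) ((if i \in e then Ai i else 1) * mu i (G :&: Einc E i)) <= _).
  apply: prodR_le => i _; split; first exact: mui_ge0.
  case: ifP => hie; first exact: local_bound.
  have -> : (e |: G) :&: Einc E i = G :&: Einc E i.
    apply/setP => x; rewrite !inE.
    case: (eqVneq x e) => [-> | _] /=; by rewrite ?hie ?andbF.
  lra.
rewrite big_split /= -big_mkcond /=; lra.
Qed.


Lemma edge_bound t (e : {set V}) : 0 < t -> e \in E ->
  \big[Rplus/0]_(F : {set {set V}} | (F \subset E) && (e \in F)) (gm F * t ^ #|F|)
  <= t * (\big[Rmult/1]_(i in e) Ai i) * Zpart E mu t.
Proof.
move=> ht heE.
rewrite (reindex_onto (fun G => e |: G) (fun F => F :\ e)) /=; last first.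
  by move=> F /andP[_ heF]; exact: setD1K.
rewrite /Zpart big_distrr /=.
apply: sum_le_sub.
- move=> G /andP[/andP[hsub _] _]; apply: subset_trans hsub; exact: subsetU1.
- move=> G /andP[_ /eqP hG].
  have heG : e \notin G by rewrite -hG; rewrite in_setD1 eqxx.
  rewrite cardsU1 heG add1n /=.
  have h1 := gm_add G heE.
  have h2 := gm_ge0 G.
  have h3 : 0 <= t ^ #|G| by apply: pow_le; lra.
  have h4 : 0 <= gm (e |: G) by exact: gm_ge0.
  move: h1 h2 h3 h4; move: (gm (e |: G)) (gm G) (t ^ #|G|) (\big[Rmult/1]_(i in e) Ai i) => x y z k.
  move=> h1 h2 h3 h4.
  have : x * z <= k * y * z by apply: Rmult_le_compat_r.
  nra.
- move=> G hG; apply: Rmult_le_pos.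
    apply: Rmult_le_pos; first lra.
    by apply: prodR_ge0 => i _; apply: Rlt_le; apply: Ai_pos.
  apply: Rmult_le_pos; [exact: gm_ge0 | apply: pow_le; lra].
Qed.

Definition CA := \big[Rplus/0]_(f in E) \big[Rmult/1]_(i in f) Ai i.

Lemma CA_ge0 : 0 <= CA.
Proof. apply: sumR_ge0 => f _; apply: prodR_ge0 => i _; apply: Rlt_le; exact: Ai_pos. Qed.

Lemma energy_upper t : 0 < t -> energy E mu t <= t * CA.
Proof.
move=> ht.
have hZ : 0 < Zpart E mu t by apply: Z_pos; lra.
rewrite /energy -/(Nt t).
suff : Nt t <= t * CA * Zpart E mu t.
  move=> H; apply: (Rmult_le_reg_r (Zpart E mu t)) => //.
  have -> : Nt t / Zpart E mu t * Zpart E mu t = Nt t by field; lra.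
  done.
have -> : Nt t = \big[Rplus/0]_(e | e \in E)
    \big[Rplus/0]_(F : {set {set V}} | (F \subset E) && (e \in F)) (gm F * t ^ #|F|).
  rewrite /Nt.
  have -> : \big[Rplus/0]_(F : {set {set V}} | F \subset E) (INR #|F| * gm F * t ^ #|F|)
     = \big[Rplus/0]_(F : {set {set V}} | F \subset E) \big[Rplus/0]_(e | e \in F) (gm F * t ^ #|F|).
    apply: eq_bigr => F _; rewrite INR_card Rmult_assoc big_distrl /=.
    by apply: eq_bigr => e _; rewrite Rmult_1_l.
  apply: exchange_big_dep => F e hF heF; exact: (subsetP hF).
have -> : t * CA * Zpart E mu t = \big[Rplus/0]_(e in E) (t * (\big[Rmult/1]_(i in e) Ai i) * Zpart E mu t).
  by rewrite -big_distrl -big_distrr.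
apply: sumR_le => e heE.
have := edge_bound (e := e) ht heE.
by [].
Qed.


Lemma Z1_eq : Zpart E mu 1 = \big[Rplus/0]_(F : {set {set V}} | F \subset E) gm F.
Proof. rewrite /Zpart; apply: eq_bigr => F _; by rewrite pow1 Rmult_1_r. Qed.

Lemma jensen t : 0 < t -> ln (Zpart E mu t) - ln t * energy E mu t <= ln (Zpart E mu 1).
Proof.
move=> ht.
have hZt : 0 < Zpart E mu t by apply: Z_pos; lra.
have hZ1 : 0 < Zpart E mu 1 by apply: Z_pos; lra.
set Zt := Zpart E mu t in hZt *. set Z1 := Zpart E mu 1 in hZ1 *.
have key : 0 <= \big[Rplus/0]_(F : {set {set V}} | F \subset E)
   (gm F * t ^ #|F| * (ln Z1 + INR #|F| * ln t - ln Zt)).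
  apply: Rle_trans (_ : 0 <= \big[Rplus/0]_(F : {set {set V}} | F \subset E)
      (gm F * t ^ #|F| - Zt / Z1 * gm F)) _.
    rewrite sumR_sub -big_distrr /= -Z1_eq -/Z1 -/(Zpart E mu t) -/Zt.
    have -> : Zt / Z1 * Z1 = Zt by field; lra.
    lra.
  apply: sumR_le => F _.
  have htk : 0 < t ^ #|F| by apply: pow_lt.
  have hg := gm_ge0 F.
  have hy : 0 < Z1 * t ^ #|F| / Zt by apply: Rdiv_lt_0_compat => //; apply: Rmult_lt_0_compat.
  have hl := ln_ge hy.
  have el : ln (Z1 * t ^ #|F| / Zt) = ln Z1 + INR #|F| * ln t - ln Zt.
    have hA : 0 < Z1 * t ^ #|F| by apply: Rmult_lt_0_compat.
    have hB : 0 < / Zt by apply: Rinv_0_lt_compat.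
    rewrite /Rdiv (ln_mult _ _ hA hB) (ln_mult _ _ hZ1 htk) (ln_pow _ ht) (ln_Rinv _ hZt); lra.
  have ei : / (Z1 * t ^ #|F| / Zt) = Zt / Z1 / t ^ #|F| by field; split; lra.
  rewrite el ei in hl.
  have : gm F * t ^ #|F| * (1 - Zt / Z1 / t ^ #|F|) <= gm F * t ^ #|F| * (ln Z1 + INR #|F| * ln t - ln Zt).
    apply: Rmult_le_compat_l; [apply: Rmult_le_pos; lra | lra].
  have -> : gm F * t ^ #|F| * (1 - Zt / Z1 / t ^ #|F|) = gm F * t ^ #|F| - Zt / Z1 * gm F by field; split; lra.
  done.
have e : \big[Rplus/0]_(F : {set {set V}} | F \subset E)
   (gm F * t ^ #|F| * (ln Z1 + INR #|F| * ln t - ln Zt)) =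
   Zt * (ln Z1 - ln Zt) + Nt t * ln t.
  rewrite /Zt /Zpart /Nt !big_distrl -big_split /=.
  apply: eq_bigr => F _.
  move: (gm F) (t ^ #|F|) (INR #|F|) => x y z; ring.
rewrite e in key.
rewrite /energy -/(Nt t) -/(Zpart E mu t) -/Zt.
have hlt : Nt t / Zt * Zt = Nt t by field; lra.
have : 0 <= Zt * (ln Z1 - ln Zt + ln t * (Nt t / Zt)).
  have -> : Zt * (ln Z1 - ln Zt + ln t * (Nt t / Zt)) = Zt * (ln Z1 - ln Zt) + Nt t * ln t by field; lra.
  done.
move=> h; have := Rmult_le_pos (/ Zt) _ (Rlt_le _ _ (Rinv_0_lt_compat _ hZt)) h.
have -> : / Zt * (Zt * (ln Z1 - ln Zt + ln t * (Nt t / Zt))) = ln Z1 - ln Zt + ln t * (Nt t / Zt) by field; lra.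
lra.
Qed.


Notation maxi i := (max_mu (Einc E i) (mu i)).
Notation mini i := (min_mu (Einc E i) (mu i)).

Lemma maxi_pos i : 0 < maxi i.
Proof. by apply: max_mu_pos; case: (hcm i). Qed.
Lemma mini_pos i : 0 < mini i.
Proof. by apply: min_mu_pos; case: (hcm i). Qed.

Lemma lnA i : ln (Ai i) = ln (maxi i) - ln (mini i).
Proof.
have h1 := maxi_pos i; have h2 := mini_pos i.
rewrite /Aratio /Rdiv ln_mult //; last exact: Rinv_0_lt_compat.
rewrite ln_Rinv //; lra.
Qed.

Lemma Fstar : exists2 F : {set {set V}}, (F \subset E) /\ 0 < gm F & #|F| = Mmax E mu.
Proof.
have P0 : (set0 \subset E) && posb (gm set0) by rewrite sub0set; apply/posbP; exact: gm0.
rewrite /Mmax (bigmax_eq_arg set0 P0); case: arg_maxnP => // U /andP[h1 /posbP h2] _.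
by exists U.
Qed.

Lemma M_bound (F : {set {set V}}) : F \subset E -> 0 < gm F -> (#|F| <= Mmax E mu)%nat.
Proof.
move=> h1 h2; apply: (leq_bigmax_cond (P := fun U : {set {set V}} => (U \subset E) && posb (gm U))).
by rewrite h1; apply/posbP.
Qed.

Lemma U_le_M t : 0 < t -> energy E mu t <= INR (Mmax E mu).
Proof.
move=> ht.
have hZ : 0 < Zpart E mu t by apply: Z_pos; lra.
rewrite /energy -/(Nt t).
suff : Nt t <= INR (Mmax E mu) * Zpart E mu t.
  move=> H; apply: (Rmult_le_reg_r (Zpart E mu t)) => //.
  have -> : Nt t / Zpart E mu t * Zpart E mu t = Nt t by field; lra.
  done.
rewrite /Nt /Zpart big_distrr /=.
apply: sumR_le => F hF.
have htk : 0 <= t ^ #|F| by apply: pow_le; lra.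
case: (Rlt_dec 0 (gm F)) => hg; last first.
  have -> : gm F = 0 by have := gm_ge0 F; lra.
  rewrite Rmult_0_r !Rmult_0_l Rmult_0_r; lra.
have hM : INR #|F| <= INR (Mmax E mu) by apply: le_INR; apply/leP; exact: M_bound.
have hx : 0 <= gm F * t ^ #|F| by apply: Rmult_le_pos; lra.
rewrite Rmult_assoc; exact: Rmult_le_compat_r.
Qed.


Lemma lnZt_ge t (F : {set {set V}}) : 0 < t -> F \subset E -> 0 < gm F ->
  ln (gm F) + INR #|F| * ln t <= ln (Zpart E mu t).
Proof.
move=> ht hF hg.
have htk : 0 < t ^ #|F| by apply: pow_lt.
rewrite -(ln_pow _ ht) -ln_mult //.
apply: ln_le; first exact: Rmult_lt_0_compat.
rewrite /Zpart.
apply: (sum_ge_term (P := fun F : {set {set V}} => F \subset E)) => // G _.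
apply: Rmult_le_pos; [exact: gm_ge0 | apply: pow_le; lra].
Qed.

Lemma ln_gm_ge (F : {set {set V}}) : 0 < gm F ->
  \big[Rplus/0]_(i : V) ln (mini i) <= ln (gm F).
Proof.
move=> hg.
rewrite -ln_prod; last by move=> i _; exact: mini_pos.
apply: ln_le; first by apply: prodR_gt0 => i _; exact: mini_pos.
apply: prodR_le => i _; split; first by apply: Rlt_le; exact: mini_pos.
apply: min_mu_le; first exact: subsetIr.
by apply: (prod_pos_factor (f := fun i => mu i (F :&: Einc E i))) => // k; exact: mui_ge0.
Qed.

Lemma INR_exp2 n : INR (expn 2 n) = 2 ^ n.
Proof. elim: n => [//|n IH]; rewrite expnS mult_INR IH /=; lra. Qed.

Lemma lnZ1_le : ln (Zpart E mu 1) <= INR #|E| * ln 2 + \big[Rplus/0]_(i : V) ln (maxi i).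
Proof.
have hP : 0 < \big[Rmult/1]_(i : V) maxi i by apply: prodR_gt0 => i _; exact: maxi_pos.
have h2 : 0 < 2 ^ #|E| by apply: pow_lt; lra.
rewrite -(ln_prod (P := predT)); last by move=> i _; exact: maxi_pos.
rewrite -(ln_pow _ (Rlt_0_2)) -ln_mult //.
apply: ln_le; first by apply: Z_pos; lra.
rewrite Z1_eq.
apply: Rle_trans (_ : \big[Rplus/0]_(F : {set {set V}} | F \subset E) (1 * \big[Rmult/1]_(i : V) maxi i) <= _).
  apply: sumR_le => F _; rewrite Rmult_1_l.
  apply: prodR_le => i _; split; first exact: mui_ge0.
  case: (Rlt_dec 0 (mu i (F :&: Einc E i))) => hp.
    apply: max_mu_ge => //; exact: subsetIr.
  have := maxi_pos i; lra.
rewrite -big_distrl /= -(INR_card (fun F : {set {set V}} => F \subset E)).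
have -> : #|(fun F : {set {set V}} => F \subset E)| = #|powerset E|.
  by apply: eq_card => F; rewrite powersetE.
rewrite card_powerset INR_exp2; exact: Rle_refl.
Qed.

Lemma energy_lower t : 1 < t ->
  energy E mu t >= INR (Mmax E mu) - / ln t *
       (INR #|E| * ln 2 + \big[Rplus/0]_(i : V) ln (Ai i)).
Proof.
move=> ht.
have hL : 0 < ln t by rewrite -ln_1; apply: ln_increasing; lra.
have ht0 : 0 < t by lra.
have hj := jensen ht0.
have [F [hF hg] hM] := Fstar.
have h1 := lnZt_ge ht0 hF hg.
have h2 := ln_gm_ge hg.
have h3 := lnZ1_le.
have eA : \big[Rplus/0]_(i : V) ln (Ai i) =
   \big[Rplus/0]_(i : V) ln (maxi i) - \big[Rplus/0]_(i : V) ln (mini i).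
  rewrite -sumR_sub; apply: eq_bigr => i _; exact: lnA.
rewrite eA -hM.
set U := energy E mu t in hj *.
set L := ln t in hL hj h1 *.
have key : L * INR #|F| - (INR #|E| * ln 2 + (\big[Rplus/0]_(i : V) ln (maxi i) - \big[Rplus/0]_(i : V) ln (mini i))) <= L * U.
  move: h1 h2 h3 hj; rewrite (Rmult_comm (INR #|F|)); lra.
apply: Rle_ge.
apply: (Rmult_le_reg_l L) => //.
move: key; set C := (INR #|E| * ln 2 + _).
have -> : L * (INR #|F| - / L * C) = L * INR #|F| - C by field; lra.
done.
Qed.


Lemma energy_ge0 t : 0 < t -> 0 <= energy E mu t.
Proof.
move=> ht; rewrite /energy -/(Nt t).
have hZ : 0 < Zpart E mu t by apply: Z_pos; lra.
apply: Rmult_le_pos; [apply: N_ge0; lra | apply: Rlt_le; exact: Rinv_0_lt_compat].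
Qed.

Lemma main_all :
  (forall s t, 0 < s -> s <= t -> energy E mu s <= energy E mu t) /\
  (forall eps, 0 < eps -> exists d, 0 < d /\
     forall t, 0 < t -> t < d -> Rabs (energy E mu t) < eps) /\
  (forall eps, 0 < eps -> exists T0,
     forall t, T0 < t -> Rabs (energy E mu t - INR (Mmax E mu)) < eps) /\
  (forall t, 0 < t ->
     energy E mu t <= t * \big[Rplus/0]_(f in E) \big[Rmult/1]_(i in f) Aratio (Einc E i) (mu i)) /\
  (forall t, 1 < t ->
     energy E mu t >= INR (Mmax E mu) - / ln t *
       (INR #|E| * ln 2 + \big[Rplus/0]_(i : V) ln (Aratio (Einc E i) (mu i)))).
Proof.
split; first exact: energy_monotone.
split.
  move=> eps heps.
  have hC := CA_ge0.
  exists (eps / (CA + 1)); split; first by apply: Rdiv_lt_0_compat; lra.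
  move=> t ht htd.
  have h0 := energy_ge0 ht.
  have hu := energy_upper ht.
  rewrite Rabs_right; last lra.
  have : t * (CA + 1) < eps.
    have e : eps = eps / (CA + 1) * (CA + 1) by field; lra.
    rewrite [X in _ < X]e; apply: Rmult_lt_compat_r; lra.
  rewrite -/CA in hu. nra.
split.
  move=> eps heps.
  set C := INR #|E| * ln 2 + \big[Rplus/0]_(i : V) ln (Aratio (Einc E i) (mu i)).
  exists (exp (Rabs C / eps + 1)) => t ht.
  have hpos : 0 < Rabs C / eps + 1.
    have : 0 <= Rabs C / eps by apply: Rmult_le_pos; [exact: Rabs_pos | apply: Rlt_le; exact: Rinv_0_lt_compat].
    lra.
  have hexp1 : 1 < exp (Rabs C / eps + 1).
    have := exp_increasing 0 _ hpos; by rewrite exp_0.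
  have ht1 : 1 < t by lra.
  have hL : Rabs C / eps + 1 < ln t.
    rewrite -[X in X < _]ln_exp; apply: ln_increasing => //; exact: exp_pos.
  have hL0 : 0 < ln t by lra.
  have hlow := energy_lower ht1.
  have hup := U_le_M (Rlt_trans _ _ _ Rlt_0_1 ht1).
  rewrite -/C in hlow.
  rewrite Rabs_left1; last lra.
  have hC1 : / ln t * C <= / ln t * Rabs C.
    apply: Rmult_le_compat_l; [apply: Rlt_le; exact: Rinv_0_lt_compat | exact: Rle_abs].
  have hC2 : / ln t * Rabs C < eps.
    apply: (Rmult_lt_reg_l (ln t)) => //.
    have -> : ln t * (/ ln t * Rabs C) = Rabs C by field; lra.
    have : Rabs C < eps * (Rabs C / eps + 1).
      have -> : eps * (Rabs C / eps + 1) = Rabs C + eps by field; lra.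
      lra.
    move=> h; apply: Rlt_le_trans h _.
    rewrite Rmult_comm; apply: Rmult_le_compat_r; lra.
  lra.
split; first exact: energy_upper.
exact: energy_lower.
Qed.

End Net.


Unset Implicit Arguments.

Theorem mainTheorem8 (V : finType) (E : {set {set V}})
  (mu : V -> {set {set V}} -> R)
  (hG : simple_graph E)
  (hmeas : network_measures E mu)
  (hcm : cavity_monotone_network E mu) :
  (* U(G;.) is non-decreasing on (0,oo) *)
  (forall s t, 0 < s -> s <= t -> energy E mu s <= energy E mu t) /\
  (* U(G;t) -> 0 as t -> 0+ *)
  (forall eps, 0 < eps -> exists d, 0 < d /\
     forall t, 0 < t -> t < d -> Rabs (energy E mu t) < eps) /\
  (* U(G;t) -> M(G) as t -> oo *)
  (forall eps, 0 < eps -> exists T0,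
     forall t, T0 < t -> Rabs (energy E mu t - INR (Mmax E mu)) < eps) /\
  (forall t, 0 < t ->
     energy E mu t <= t * \big[Rplus/0]_(f in E) \big[Rmult/1]_(i in f) Aratio (Einc E i) (mu i)) /\
  (forall t, 1 < t ->
     energy E mu t >= INR (Mmax E mu) - / ln t *
       (INR #|E| * ln 2 + \big[Rplus/0]_(i : V) ln (Aratio (Einc E i) (mu i)))).
Proof. exact: (main_all hmeas hcm). Qed.
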